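(* Consider the mergesort that recursively splits the input sequence into two contiguous parts, sorts each, and merges them with the following merge algorithm: set $T=\emptyset$; repeat: if $T_1$ is empty return $\mathrm{join}(T,T_2)$; else if $T_2$ is empty return $\mathrm{join}(T,T_1)$; else with $k_1=\min(T_1)$, $k_2=\min(T_2)$, if $k_1>k_2$ let $(t,T_2)=\mathrm{split}(T_2,k_1)$, else let $(t,T_1)=\mathrm{split}(T_1,k_2)$, and set $T=\mathrm{join}(T,t)$. Then this mergesort sorts a sequence $\pi$ in time $O(\mathrm{LIB}(\pi))$.
   Context: Trees are heterogeneous finger search trees: $\mathrm{split}(T,k)$ returns the trees of keys of $T$ less than and greater than $k$; $\mathrm{join}$ of two trees whose key ranges do not interleave returns a BST on their union; both run in amortized time $O(\lg(\min(|T_1|,|T_2|)+1))$ where $T_1,T_2$ are the two smaller trees. Keys are distinct. $\mathrm{LIB}(\pi)$ is computed with respect to the static binary tree $P$ given by the recursion of the mergesort, whose leaves are the keys of $\pi$ in the order of $\pi$: for each internal vertex $v$, list the leaves below $v$ in sorted key order, labeling each L or R by the subtree of $v$ containing it; with $S(v)$ the decomposition into the minimum number of runs of equal labels, $\mathrm{LIB}(v)=\sum_{r\in S(v)}\lg(|r|+1)$ and $\mathrm{LIB}(\pi)=\sum_v\mathrm{LIB}(v)$. *)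

(* Defs.v *)
From Stdlib Require Import Reals.
From mathcomp Require Import all_boot.

Set Implicit Arguments. Unset Strict Implicit. Unset Printing Implicit Defensive.

Definition lg (x : R) : R := Rdiv (ln x) (ln 2).

(* Trees are modelled by their (sorted) sequence of keys; the algorithm's
   behaviour only depends on the key sets.  split and join on key sets: *)
Definition tsplit (T : seq nat) (k : nat) : seq nat * seq nat :=
  ([seq x <- T | x < k], [seq x <- T | k < x]).
(* join of trees with non-interleaving key ranges, first one smaller *)
Definition tjoin (T1 T2 : seq nat) : seq nat := T1 ++ T2.

(* Cost charged to one split/join whose two smaller trees have sizes a, b:
   its amortized bound O(lg(min(a,b)+1)), plus a constant 1. *)
Definition opcost (a b : nat) : R := Rplus R1 (lg (Rplus (INR (minn a b)) 1)).

(* The merge loop; state (T, T1, T2); returns (result, total cost).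
   Each loop iteration costs 1 in addition to its split/join costs. *)
Fixpoint merge_aux (fuel : nat) (T T1 T2 : seq nat) : seq nat * R :=
  match fuel with
  | 0 => (T ++ T1 ++ T2, R0)
  | f.+1 =>
    match T1, T2 with
    | [::], _ => (tjoin T T2, Rplus R1 (opcost (size T) (size T2)))
    | _, [::] => (tjoin T T1, Rplus R1 (opcost (size T) (size T1)))
    | k1 :: _, k2 :: _ =>
      if k2 < k1 then
        let: (t, T2') := tsplit T2 k1 in
        let: (res, c) := merge_aux f (tjoin T t) T1 T2' in
        (res, Rplus (Rplus (Rplus R1 (opcost (size t) (size T2'))) (opcost (size T) (size t))) c)
      else
        let: (t, T1') := tsplit T1 k2 in
        let: (res, c) := merge_aux f (tjoin T t) T1' T2 in
        (res, Rplus (Rplus (Rplus R1 (opcost (size t) (size T1'))) (opcost (size T) (size t))) c)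
    end
  end.

Definition merge_trees (T1 T2 : seq nat) : seq nat * R :=
  merge_aux (size T1 + size T2).+1 [::] T1 T2.

(* Mergesort splitting a sequence of length n >= 2 into its first [half n]
   elements and the rest.  Returns (sorted output, total cost); each
   recursive call costs 1 in addition to the merge cost. *)
Fixpoint msort_aux (fuel : nat) (half : nat -> nat) (s : seq nat) : seq nat * R :=
  match fuel with
  | 0 => (s, R1)
  | f.+1 =>
    if size s <= 1 then (s, R1) else
    let: (sl, cl) := msort_aux f half (take (half (size s)) s) in
    let: (sr, cr) := msort_aux f half (drop (half (size s)) s) in
    let: (m, cm) := merge_trees sl sr in
    (m, Rplus (Rplus (Rplus R1 cl) cr) cm)
  end.

Definition mergesort (half : nat -> nat) (s : seq nat) : seq nat * R :=
  msort_aux (size s) half s.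

Fixpoint runs_aux (b : bool) (n : nat) (s : seq bool) : seq nat :=
  match s with
  | [::] => [:: n]
  | c :: s' => if c == b then runs_aux b n.+1 s' else n :: runs_aux c 1 s'
  end.
Definition runs (s : seq bool) : seq nat :=
  if s is b :: s' then runs_aux b 1 s' else [::].

(* LIB of an internal vertex whose left subtree has leaves l and right subtree
   leaves r: list leaves in sorted key order, label L (true) / R (false). *)
Definition LIB_vertex (l r : seq nat) : R :=
  foldr (fun n acc => Rplus (lg (Rplus (INR n) R1)) acc) R0
    (runs [seq x \in l | x <- sort leq (l ++ r)]).

Fixpoint LIB_aux (fuel : nat) (half : nat -> nat) (s : seq nat) : R :=
  match fuel with
  | 0 => R0
  | f.+1 =>
    if size s <= 1 then R0 else
    Rplus (Rplus (LIB_vertex (take (half (size s)) s) (drop (half (size s)) s))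
                 (LIB_aux f half (take (half (size s)) s)))
          (LIB_aux f half (drop (half (size s)) s))
  end.

Definition LIB (half : nat -> nat) (s : seq nat) : R := LIB_aux (size s) half s.

(* Main.v *)
Require Import Defs.
From Stdlib Require Import Reals Lra.
From mathcomp Require Import all_boot.

Local Open Scope R_scope.
Definition L (n : nat) : R := lg (INR n + R1).

Lemma ln2_pos : 0 < ln 2.
Proof. have := ln_lt_2; have : 0 < / 2 by lra. lra. Qed.

Lemma lg_le x y : 0 < x -> x <= y -> lg x <= lg y.
Proof.
move=> hx hxy; rewrite /lg /Rdiv; apply: Rmult_le_compat_r.
  by apply: Rlt_le; apply: Rinv_0_lt_compat; exact: ln2_pos.
case: (Rle_lt_or_eq_dec _ _ hxy) => h; last by rewrite h; lra.
by apply: Rlt_le; apply: ln_increasing.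
Qed.

Lemma L_mono a b : (a <= b)%N -> L a <= L b.
Proof.
move=> h; rewrite /L; apply: lg_le; first by have := pos_INR a; lra.
have := le_INR _ _ (ssrnat.leP h); lra.
Qed.

Lemma L_ge0 n : 0 <= L n.
Proof.
have -> : 0 = lg 1 by rewrite /lg ln_1 /Rdiv Rmult_0_l.
rewrite /L; apply: lg_le; first lra. have := pos_INR n; lra.
Qed.

Lemma L_ge1 n : (1 <= n)%N -> 1 <= L n.
Proof.
move=> h; have -> : 1 = lg 2.
  rewrite /lg /Rdiv Rinv_r //; have := ln2_pos; lra.
rewrite /L; apply: lg_le; first lra.
have := le_INR _ _ (ssrnat.leP h); rewrite /=; lra.
Qed.

Lemma opcost_le a b c : (minn a b <= c)%N -> opcost a b <= 1 + L c.
Proof.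
move=> h; rewrite /opcost; have := @L_mono (minn a b) c h; rewrite /L; change (IZR 1) with R1; lra.
Qed.
Local Close Scope R_scope.

Lemma sorted_cat_le (s1 s2 : seq nat) : sorted leq s1 -> sorted leq s2 ->
  (forall x y, x \in s1 -> y \in s2 -> x <= y) -> sorted leq (s1 ++ s2).
Proof.
case: s1 => [|x s1] //= h1 h2 h.
rewrite cat_path h1 /= path_sortedE; last exact: leq_trans.
rewrite h2 andbT; apply/allP => y hy; apply: h => //.
exact: mem_last.
Qed.

Lemma sort_catl (s1 s2 : seq nat) : sorted leq s1 ->
  (forall x y, x \in s1 -> y \in s2 -> x <= y) ->
  sort leq (s1 ++ s2) = s1 ++ sort leq s2.
Proof.
move=> h1 h; apply: (sorted_eq leq_trans anti_leq).
- exact: sort_sorted leq_total _.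
- apply: sorted_cat_le => //; first exact: sort_sorted leq_total _.
  by move=> x y hx; rewrite mem_sort; apply: h.
- by rewrite perm_sort perm_cat2l perm_sym perm_sort.
Qed.

Lemma sort_cons_min k (u : seq nat) : (forall y, y \in u -> k <= y) ->
  sort leq (k :: u) = k :: sort leq u.
Proof.
move=> h; apply: (@sort_catl [:: k]) => // x y; rewrite inE => /eqP ->.
exact: h.
Qed.

Lemma sort_perm (s1 s2 : seq nat) : perm_eq s1 s2 -> sort leq s1 = sort leq s2.
Proof. by move/(perm_sortP leq_total leq_trans anti_leq). Qed.

Lemma sort_split (s u : seq nat) k : sorted ltn s -> k \notin s ->
  (forall y, y \in u -> k <= y) ->
  sort leq (s ++ u) = [seq x <- s | x < k] ++ sort leq ([seq x <- s | k < x] ++ u).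
Proof.
move=> hs hk hu.
have hp : perm_eq s ([seq x <- s | x < k] ++ [seq x <- s | k < x]).
  apply: (@perm_trans _ ([seq x <- s | x < k] ++ [seq x <- s | predC (fun x => x < k) x])).
    by rewrite perm_sym perm_filterC.
  rewrite perm_cat2l.
  rewrite (@eq_in_filter _ _ (fun x => k < x)) // => x hx /=.
  rewrite -leqNgt leq_eqVlt; case: eqP => //= ex; subst x.
  by rewrite hx in hk.
rewrite (@sort_perm _ ([seq x <- s | x < k] ++ ([seq x <- s | k < x] ++ u))).
  apply: sort_catl.
    by apply: sorted_filter; [exact: leq_trans|]; move: hs; rewrite ltn_sorted_uniq_leq => /andP[].
  move=> x y; rewrite mem_filter => /andP[hx _]; rewrite mem_cat mem_filter.
  case/orP => [/andP[hy _]|/hu hy]; apply: ltnW; first exact: ltn_trans hy.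
  exact: leq_trans hx hy.
by rewrite catA perm_cat2r.
Qed.
Arguments sort_split {s u k}.

Lemma runs_aux_nseq b n k s : runs_aux b n (nseq k b ++ s) = runs_aux b (n + k) s.
Proof.
elim: k n => [|k IH] n /=; first by rewrite addn0.
by rewrite eqxx IH addnS.
Qed.

Lemma runs_nseq_cons m b c s : 0 < m -> c != b ->
  runs (nseq m b ++ c :: s) = m :: runs (c :: s).
Proof.
case: m => [|m] // _ hc /=; rewrite runs_aux_nseq /= (negbTE hc).
by rewrite add1n.
Qed.

Lemma runs_nseq m b : 0 < m -> runs (nseq m b) = [:: m].
Proof.
case: m => [|m] // _ /=; have := runs_aux_nseq b 1 m [::]; rewrite cats0 => ->.
by rewrite add1n.
Qed.

Lemma map_const_in (f : nat -> bool) b s : (forall x, x \in s -> f x = b) ->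
  map f s = nseq (size s) b.
Proof.
elim: s => [|x s IH] //= h; rewrite h ?inE ?eqxx // IH // => y hy.
by apply: h; rewrite inE hy orbT.
Qed.

Lemma sorted_leq_of_ltn (s : seq nat) : sorted ltn s -> sorted leq s.
Proof. by rewrite ltn_sorted_uniq_leq => /andP[]. Qed.

Lemma head_min k s : sorted ltn (k :: s) -> forall y, y \in s -> k < y.
Proof. by move=> /= /(order_path_min ltn_trans) /allP. Qed.
Arguments head_min {k s}.

Lemma LV_base_r (T2 : seq nat) : sorted ltn T2 -> 0 < size T2 ->
  LIB_vertex [::] T2 = Rplus (L (size T2)) R0.
Proof.
move=> h hn; rewrite /LIB_vertex /= sorted_sort; last first.
  exact: sorted_leq_of_ltn. exact: leq_trans.
by rewrite (@map_const_in _ false) // runs_nseq.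
Qed.

Lemma LV_base_l (T1 : seq nat) : sorted ltn T1 -> 0 < size T1 ->
  LIB_vertex T1 [::] = Rplus (L (size T1)) R0.
Proof.
move=> h hn; rewrite /LIB_vertex /= cats0 sorted_sort; last first.
  exact: sorted_leq_of_ltn. exact: leq_trans.
by rewrite (@map_const_in _ true) // runs_nseq.
Qed.

Lemma LV_step1 k1 T10 k2 T20 :
  sorted ltn (k1 :: T10) -> sorted ltn (k2 :: T20) ->
  (forall x, x \in k1 :: T10 -> x \in k2 :: T20 -> False) -> k2 < k1 ->
  sort leq ((k1 :: T10) ++ (k2 :: T20)) =
    [seq x <- k2 :: T20 | x < k1] ++ sort leq ((k1 :: T10) ++ [seq x <- k2 :: T20 | k1 < x]) /\
  LIB_vertex (k1 :: T10) (k2 :: T20) =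
    Rplus (L (size [seq x <- k2 :: T20 | x < k1]))
          (LIB_vertex (k1 :: T10) [seq x <- k2 :: T20 | k1 < x]).
Proof.
move=> h1 h2 hd hlt.
set T1 := k1 :: T10; set T2 := k2 :: T20.
set t := [seq x <- T2 | x < k1]; set T2' := [seq x <- T2 | k1 < x].
have hk1 : k1 \notin T2 by apply/negP => /(hd k1); rewrite inE eqxx; apply.
have hT1 : forall y, y \in T1 -> k1 <= y.
  by move=> y; rewrite inE => /orP[/eqP ->//|/(head_min h1)/ltnW].
have E1 : sort leq (T1 ++ T2) = t ++ sort leq (T1 ++ T2').
  rewrite (@sort_perm _ (T2 ++ T1)); last by rewrite perm_catC.
  rewrite (sort_split h2 hk1 hT1); congr (_ ++ _); apply: sort_perm.
  by rewrite perm_catC.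
have E2 : sort leq (T1 ++ T2') = k1 :: sort leq (T10 ++ T2').
  apply: sort_cons_min => y; rewrite mem_cat => /orP[/(head_min h1)/ltnW //|].
  by rewrite mem_filter => /andP[/ltnW].
split => //.
have ht : 0 < size t.
  by rewrite size_filter -has_count; apply/hasP; exists k2; rewrite ?inE ?eqxx.
rewrite /LIB_vertex E1 E2 map_cat /= inE eqxx /=.
rewrite (@map_const_in _ false); last first.
  move=> x; rewrite mem_filter => /andP[_ hx]; apply/negP => hx1.
  exact: (hd x hx1 hx).
by rewrite runs_nseq_cons.
Qed.

Lemma LV_step2 k1 T10 k2 T20 :
  sorted ltn (k1 :: T10) -> sorted ltn (k2 :: T20) ->
  (forall x, x \in k1 :: T10 -> x \in k2 :: T20 -> False) -> k1 < k2 ->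
  sort leq ((k1 :: T10) ++ (k2 :: T20)) =
    [seq x <- k1 :: T10 | x < k2] ++ sort leq ([seq x <- k1 :: T10 | k2 < x] ++ (k2 :: T20)) /\
  LIB_vertex (k1 :: T10) (k2 :: T20) =
    Rplus (L (size [seq x <- k1 :: T10 | x < k2]))
          (LIB_vertex [seq x <- k1 :: T10 | k2 < x] (k2 :: T20)).
Proof.
move=> h1 h2 hd hlt.
set T1 := k1 :: T10; set T2 := k2 :: T20.
set t := [seq x <- T1 | x < k2]; set T1' := [seq x <- T1 | k2 < x].
have hk2 : k2 \notin T1 by apply/negP => /hd; rewrite inE eqxx; apply.
have hT2 : forall y, y \in T2 -> k2 <= y.
  by move=> y; rewrite inE => /orP[/eqP ->//|/(head_min h2)/ltnW].
have E1 : sort leq (T1 ++ T2) = t ++ sort leq (T1' ++ T2).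
  exact: (sort_split h1 hk2 hT2).
have E2 : sort leq (T1' ++ T2) = k2 :: sort leq (T1' ++ T20).
  rewrite (@sort_perm _ (k2 :: (T1' ++ T20))); last first.
    by rewrite (perm_catCA T1' [:: k2] T20).
  apply: sort_cons_min => y; rewrite mem_cat => /orP[|/(head_min h2)/ltnW //].
  by rewrite mem_filter => /andP[/ltnW].
split => //.
have ht : 0 < size t.
  by rewrite size_filter -has_count; apply/hasP; exists k1; rewrite ?inE ?eqxx.
rewrite /LIB_vertex E1 E2 map_cat /= (negbTE hk2).
have -> : (k2 \in T1') = false by rewrite mem_filter ltnn.
rewrite (@map_const_in _ true); last by move=> x; rewrite mem_filter => /andP[].
rewrite runs_nseq_cons //=; do 3 f_equal.
apply/eq_in_map => x; rewrite mem_sort mem_cat => /orP[hx|hx].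
  by rewrite hx; move: hx; rewrite mem_filter => /andP[].
have hx2 : x \in T2 by rewrite inE hx orbT.
have hx1 : x \in T1 = false by apply/negP => hx1; exact: (hd x hx1 hx2).
by rewrite hx1 mem_filter hx1 andbF.
Qed.

Lemma merge_ok f : forall T T1 T2, sorted ltn T1 -> sorted ltn T2 ->
  (forall x, x \in T1 -> x \in T2 -> False) ->
  0 < size T1 + size T2 -> size T1 + size T2 < f ->
  (merge_aux f T T1 T2).1 = T ++ sort leq (T1 ++ T2) /\
  Rle (merge_aux f T T1 T2).2 (Rmult 5 (LIB_vertex T1 T2)) /\
  Rle 1 (LIB_vertex T1 T2).
Proof.
elim: f => [|f IH] T T1 T2 h1 h2 hd hne hf //.
case: T1 h1 hd hne hf => [|k1 T10] h1 hd hne hf;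
  case: T2 h2 hd hne hf => [|k2 T20] h2 hd hne hf //.
- cbn [merge_aux fst snd]; rewrite LV_base_r // /tjoin /= sorted_sort //; last first.
    exact: sorted_leq_of_ltn. exact: leq_trans.
  have := @opcost_le (size T) (size T20).+1 (size T20).+1 (geq_minr _ _).
  have := @L_ge1 (size T20).+1 isT. change (IZR 1) with R1. split => //; lra.
- cbn [merge_aux fst snd]; rewrite LV_base_l // /tjoin /= cats0 sorted_sort //; last first.
    exact: sorted_leq_of_ltn. exact: leq_trans.
  have := @opcost_le (size T) (size T10).+1 (size T10).+1 (geq_minr _ _).
  have := @L_ge1 (size T10).+1 isT. change (IZR 1) with R1. split => //; lra.
cbn [merge_aux]; case: ifP => hlt.
- have [E1 E2] := LV_step1 _ _ _ _ h1 h2 hd hlt.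
  rewrite /tsplit /tjoin; cbv beta iota.
  set t := [seq x <- k2 :: T20 | x < k1] in E1 E2 *.
  set T2' := [seq x <- k2 :: T20 | k1 < x] in E1 E2 *.
  have ht : 0 < size t by rewrite /t /= hlt.
  have hsz : size T2' <= size T20.
    by rewrite /T2' /= ltnNge (ltnW hlt) /= size_filter count_size.
  have [] := IH (T ++ t) (k1 :: T10) T2' h1.
  - by apply: sorted_filter => //; exact: ltn_trans.
  - by move=> x hx; rewrite mem_filter => /andP[_]; apply: hd.
  - by [].
  - move: hf; rewrite /= !addSn !addnS ltnS => hf. by apply: leq_ltn_trans hf; rewrite ltnS leq_add2l.
  case: (merge_aux _ _ _ _) => res c /= -> [hc hL].
  rewrite -catA E1 E2; split => //.
  have := @opcost_le (size t) (size T2') (size t) (geq_minl _ _).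
  have := @opcost_le (size T) (size t) (size t) (geq_minr _ _).
  have := @L_ge1 _ ht. change (IZR 1) with R1. split; lra.
have hlt' : k1 < k2.
  rewrite ltn_neqAle leqNgt hlt andbT; apply/eqP => e; subst k2.
  by apply: (hd k1); rewrite inE eqxx.
have [E1 E2] := LV_step2 _ _ _ _ h1 h2 hd hlt'.
rewrite /tsplit /tjoin; cbv beta iota.
set t := [seq x <- k1 :: T10 | x < k2] in E1 E2 *.
set T1' := [seq x <- k1 :: T10 | k2 < x] in E1 E2 *.
have ht : 0 < size t by rewrite /t /= hlt'.
have hsz : size T1' <= size T10.
  by rewrite /T1' /= hlt /= size_filter count_size.
have [] := IH (T ++ t) T1' (k2 :: T20) _ h2.
- by apply: sorted_filter => //; exact: ltn_trans.
- by move=> x; rewrite mem_filter => /andP[_]; apply: hd.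
- by rewrite addnS.
- move: hf; rewrite /= !addSn !addnS ltnS => hf.
  by apply: leq_ltn_trans hf; rewrite ltnS leq_add2r.
case: (merge_aux _ _ _ _) => res c /= -> [hc hL].
rewrite -catA E1 E2; split => //.
have := @opcost_le (size t) (size T1') (size t) (geq_minl _ _).
have := @opcost_le (size T) (size t) (size t) (geq_minr _ _).
have := @L_ge1 _ ht. change (IZR 1) with R1. split; lra.
Qed.

Lemma LV_sort (l r : seq nat) :
  LIB_vertex (sort leq l) (sort leq r) = LIB_vertex l r.
Proof.
rewrite /LIB_vertex (@sort_perm (sort leq l ++ sort leq r) (l ++ r)); last first.
  by apply: perm_cat; rewrite perm_sort.
by congr (foldr _ _ (runs _)); apply: eq_map => x; rewrite mem_sort.
Qed.

Lemma sorted_ltn_sort (s : seq nat) : uniq s -> sorted ltn (sort leq s).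
Proof.
by move=> hu; rewrite ltn_sorted_uniq_leq sort_uniq hu (sort_sorted leq_total).
Qed.

Lemma msort_ok half : (forall n : nat, 2 <= n -> 0 < half n < n) ->
  forall f s, uniq s -> size s <= f ->
  (msort_aux f half s).1 = sort leq s /\
  Rle (msort_aux f half s).2 (Rplus (Rmult 7 (LIB_aux f half s)) 1) /\
  Rle 0 (LIB_aux f half s) /\
  (2 <= size s -> Rle 1 (LIB_aux f half s)).
Proof.
move=> Hh; elim => [|f IH] s hu hf.
  case: s hu hf => // _ _ /=; split => //; change R0 with (IZR 0); change R1 with (IZR 1); split; first lra. by split; [lra|].
cbn [msort_aux LIB_aux]; case: ifP => hs1.
  split; last by (rewrite /=; change R0 with (IZR 0); change R1 with (IZR 1); split; [lra | split; [lra| move=> h; move: hs1; rewrite leqNgt h]]).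
  have hs : sorted leq s by case: s hu hf hs1 => [|x [|y s]].
  by rewrite /= (sorted_sort leq_trans hs).
have h2 : 2 <= size s by rewrite ltnNge hs1.
have /andP[h0 hn] := Hh _ h2.
set l := take (half (size s)) s; set r := drop (half (size s)) s.
have hsl : size l = half (size s) by rewrite /l size_takel // ltnW.
have hsr : size r = size s - half (size s) by rewrite /r size_drop.
have hul : uniq l by apply: take_uniq.
have hur : uniq r by apply: drop_uniq.
have hlr : uniq (l ++ r) by rewrite cat_take_drop.
have hlf : size l <= f by rewrite hsl -ltnS (leq_trans hn hf).
have hrf : size r <= f.
  by rewrite hsr -ltnS; apply: leq_trans hf; rewrite ltn_subrL h0 (ltnW h2).
have [El [Cl [Pl _]]] := IH l hul hlf.
have [Er [Cr [Pr _]]] := IH r hur hrf.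
case: (msort_aux f half l) El Cl => sl cl /= -> Cl.
case: (msort_aux f half r) Er Cr => sr cr /= -> Cr.
rewrite /merge_trees.
have [] := @merge_ok _ [::] _ _ (sorted_ltn_sort _ hul) (sorted_ltn_sort _ hur) _ _ (ltnSn _).
- move=> x; rewrite !mem_sort => hxl hxr; move: hlr; rewrite cat_uniq => /and3P[_ /hasP hh _].
  by apply: hh; exists x.
- by rewrite !size_sort hsl addn_gt0 h0.
case: (merge_aux _ _ _ _) => m cm /= -> [Cm HL].
rewrite LV_sort in Cm HL.
split.
  rewrite (@sort_perm _ (l ++ r)); last by apply: perm_cat; rewrite perm_sort.
  by rewrite /l /r cat_take_drop.
change (IZR 1) with R1 in *.
split; first lra.
split; first lra.
move=> _; lra.
Qed.


Theorem lemma7 :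
  exists C : R,
  forall half : nat -> nat,
  (forall n : nat, 2 <= n -> 0 < half n < n) ->
  forall pi : seq nat, uniq pi ->
    (mergesort half pi).1 = sort leq pi /\
    (2 <= size pi -> Rle (mergesort half pi).2 (Rmult C (LIB half pi))).
Proof.
exists (IZR 8) => half Hh pi hu.
have [E [C [P Q]]] := @msort_ok half Hh _ _ hu (leqnn (size pi)).
rewrite /mergesort /LIB; split => // h2; have := Q h2.
change (IZR 1) with R1 in *; lra.
Qed.
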